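(* Let $\kappa=(\kappa_1,\dots,\kappa_n)\in\Gamma_k$ with $\kappa_1\geq\kappa_2\geq\dots\geq\kappa_n$, and let $A>0$ with $\kappa_n>-A$. Let $C_0=C(\sigma_k,n,A)$ be a constant such that $\kappa_k<C_0$ (a constant depending only on $n$, $k$, $A$ and an upper bound for $\sigma_k(\kappa)$, valid for all such $\kappa$). Let $N>\max\{1,C_0\}$. If $\kappa_1\geq N^{2^{k-1}}$, then there exists $1\leq l\leq k-1$ such that $\kappa_l\geq M^2$ and $\kappa_{l+1}\leq M$, where $M=N^{2^{k-l-1}}$.
   Context: $\sigma_m(\kappa)$ is the $m$-th elementary symmetric polynomial on $\mathbb{R}^n$, and $\Gamma_k=\{\kappa\in\mathbb{R}^n:\sigma_j(\kappa)>0\text{ for all }1\leq j\leq k\}$ is the Gårding cone. *)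

(* Defs.v *)
From HB Require Import structures.
From mathcomp Require Import all_boot all_order all_algebra.
Set Implicit Arguments. Unset Strict Implicit. Unset Printing Implicit Defensive.
Import Order.TTheory GRing.Theory Num.Theory.
Local Open Scope ring_scope.

Definition sigma (R : nzRingType) (n m : nat) (kappa : 'I_n -> R) : R :=
  \sum_(I : {set 'I_n} | #|I| == m) \prod_(i in I) kappa i.

Definition garding (R : numDomainType) (n k : nat) (kappa : 'I_n -> R) : Prop :=
  forall j : nat, (1 <= j <= k)%N -> 0 < sigma j kappa.

(* 1-based component kappa_i (i in 1..n); value 0 outside that range *)
Definition kcomp (R : nzRingType) (n : nat) (kappa : 'I_n -> R) (i : nat) : R :=
  match @insub nat (fun j => j < n)%N _ i.-1 with
  | Some j => kappa j
  | None => 0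
  end.

Definition sorted_desc (R : numDomainType) (n : nat) (kappa : 'I_n -> R) : Prop :=
  forall i j : 'I_n, (i <= j)%N -> kappa j <= kappa i.

(* Main.v *)
Require Import Defs.
From HB Require Import structures.
From mathcomp Require Import all_boot all_order all_algebra.
From mathcomp Require Import zify.
Import Order.TTheory GRing.Theory Num.Theory.
Local Open Scope ring_scope.

Lemma descend (R : realFieldType) (f : nat -> R) (N : R) (k : nat) :
  f k < N ->
  forall m j, (j + m = k.-1)%N -> (1 <= j)%N -> N ^+ (2 ^ (k - j)) <= f j ->
  exists l : nat, (1 <= l <= k.-1)%N /\
    (let M := N ^+ (2 ^ (k - l - 1)) in
     M ^+ 2 <= f l /\ f l.+1 <= M).
Proof.
move=> Hk; elim=> [|m IH] j Hj H1 Hf.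
- exists j; split; first by apply/andP; split => //; rewrite -Hj addn0.
  have Ej : (k - j - 1 = 0)%N by lia.
  have Ej1 : (j.+1 = k)%N by lia.
  have Ej2 : (k - j = 1)%N by lia.
  rewrite /= Ej Ej1 expn0 expr1; split; last exact: ltW.
  by rewrite Ej2 in Hf.
- have Ej2 : (k - j = (k - j - 1).+1)%N by lia.
  have [Hle|Hlt] := lerP (f j.+1) (N ^+ (2 ^ (k - j - 1))).
  + exists j; split; first by apply/andP; split => //; lia.
    by rewrite /= -exprM -expnSr -Ej2.
  + apply: (IH j.+1) => //; first by lia.
    have -> : (k - j.+1 = k - j - 1)%N by lia.
    exact: ltW.
Qed.

Theorem proposition2p15 (R : realFieldType) (n k : nat) (A S C0 N : R)
  (kappa : 'I_n -> R) :
  (1 <= k <= n)%N ->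
  0 < A ->
  (* C0 = C(sigma_k, n, A): bounds kappa_k for every admissible kappa'
     with sigma_k(kappa') <= S *)
  (forall kappa' : 'I_n -> R,
      garding k kappa' -> sorted_desc kappa' ->
      - A < kcomp kappa' n -> sigma k kappa' <= S ->
      kcomp kappa' k < C0) ->
  garding k kappa -> sorted_desc kappa ->
  - A < kcomp kappa n -> sigma k kappa <= S ->
  Num.max 1 C0 < N ->
  N ^+ (2 ^ k.-1) <= kcomp kappa 1 ->
  exists l : nat, (1 <= l <= k.-1)%N /\
    (let M := N ^+ (2 ^ (k - l - 1)) in
     M ^+ 2 <= kcomp kappa l /\ kcomp kappa l.+1 <= M).
Proof.
move=> /andP[k1 kn] A0 HC G So HA HS HN H1.
have Hk : kcomp kappa k < N.
  apply: lt_trans (HC _ G So HA HS) _.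
  by apply: le_lt_trans HN; rewrite le_max lexx orbT.
case: k k1 kn HC G HS Hk H1 => [//|[|k]] _ kn HC G HS Hk H1.
- by move: (lt_le_trans Hk H1); rewrite ltxx.
- apply: (@descend R (kcomp kappa) N k.+2 Hk k 1%N) => //.

Qed.
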